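(* Let $(\mathcal B,<)$ be a monoidal poset, $B\in\mathcal B$ and $i,j$ nodes. Then: (i) if $i\not\sim j$ and $r_ir_jB<r_iB<B$, then $r_ir_jB<r_jB<B$; (ii) if $i\not\sim j$, $B<r_iB$, $B<r_jB$ and $r_iB\ne r_jB$, then $r_ir_jB>r_iB$ and $r_ir_jB>r_jB$; (iii) if $i\sim j$, $B<r_iB$ and $B<r_jB$, then $r_iB<r_jr_iB<r_ir_jr_iB$ and $r_jB<r_ir_jB<r_jr_ir_jB$; (iv) if $i\sim j$ and $r_jr_ir_jB<r_jr_iB<r_iB<B$, then $r_jr_ir_jB<r_ir_jB<r_jB<B$; (v) if $\alpha_i\notin B^\perp\cup B$, then either $r_iB<B$ or $r_iB>B$.
   Context: Setting: $M$ is a spherical simply laced Coxeter diagram with nodes $1,\dots,n$ ($i\sim j$: distinct adjacent nodes; $i\not\sim j$ otherwise); $W$ its Weyl group with positive roots $\Phi^+$, fundamental roots $\alpha_i$, reflections $r_i$, inner product with $(\alpha_i,\alpha_i)=2$, $(\alpha_i,\alpha_j)=-1$ if $i\sim j$, $0$ otherwise; height $\mathrm{ht}(\sum a_k\alpha_k)=\sum a_k$. For a set $B$ of mutually orthogonal positive roots, $wB=\Phi^+\cap\{\pm w\beta:\beta\in B\}$, and $B^\perp$ is the set of roots orthogonal to all elements of $B$. A $W$-orbit $\mathcal B$ of such sets is admissible if for every $B\in\mathcal B$, all nodes $i\not\sim j$ and root $\gamma$ with $\gamma,\gamma-\alpha_i+\alpha_j\in B$, $r_iB=r_jB$. For $B,C\in\mathcal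 B$ write $B\prec C$ if $B\ne C$ and the minimal height of an element of $B\setminus C$ is strictly smaller than the minimal height of an element of $C\setminus B$. For admissible $\mathcal B$, the monoidal poset $(\mathcal B,<)$ is $\mathcal B$ with the partial order $<$ given by the transitive closure of $\{(B,r_jB): B\in\mathcal B,\ j\text{ a node},\ B\prec r_jB\}$; $>$ is the reverse relation. *)

(* Defs.v *)
From HB Require Import structures.
From mathcomp Require Import all_boot all_order all_algebra finmap.
From Stdlib Require Export Relation_Operators.
Set Implicit Arguments. Unset Strict Implicit. Unset Printing Implicit Defensive.
Import Order.TTheory GRing.Theory Num.Theory.
Local Open Scope fset_scope.
Local Open Scope ring_scope.

(* Vectors in the root lattice, written in the basis of fundamental roots
   alpha_0, ..., alpha_{n-1} (nodes are 'I_n). *)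
Notation vec n := {ffun 'I_n -> int}.

Definition coxeter_diagram n (adj : rel 'I_n) : Prop :=
  symmetric adj /\ irreflexive adj.

Definition cartan n (adj : rel 'I_n) (i j : 'I_n) : int :=
  if i == j then 2 else if adj i j then -1 else 0.

Definition ip n (adj : rel 'I_n) (u v : vec n) : int :=
  \sum_(i < n) \sum_(j < n) u i * v j * cartan adj i j.

Definition alpha n (i : 'I_n) : vec n := [ffun k => (k == i)%:R].

Definition refl n (adj : rel 'I_n) (i : 'I_n) (v : vec n) : vec n :=
  [ffun k => v k - ip adj v (alpha i) * alpha i k].

(* a word w = [:: i1; ...; ik] denotes r_i1 ... r_ik in W *)
Definition act n (adj : rel 'I_n) (w : seq 'I_n) (v : vec n) : vec n :=
  foldr (refl adj) v w.

(* W is finite: only finitely many distinct elements (as linear maps) *)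
Definition spherical n (adj : rel 'I_n) : Prop :=
  exists s : seq (seq 'I_n), forall w : seq 'I_n,
    exists2 w', w' \in s & forall v, act adj w v = act adj w' v.

Definition is_root n (adj : rel 'I_n) (v : vec n) : Prop :=
  exists (w : seq 'I_n) (i : 'I_n), v = act adj w (alpha i).

Definition nonneg_vec n (v : vec n) : bool := [forall k, 0 <= v k].

Definition is_pos_root n (adj : rel 'I_n) (v : vec n) : Prop :=
  is_root adj v /\ nonneg_vec v.

(* wB = Phi^+ cap {+- w b : b in B}  (for B a set of roots, the elements of
   {+- w b} are roots, so intersecting with Phi^+ = keeping the nonnegative ones) *)
Definition wset n (adj : rel 'I_n) (w : seq 'I_n) (B : {fset vec n}) : {fset vec n} :=
  [fset v in [fset act adj w b | b in B] `|` [fset [ffun k => - act adj w b k] | b in B]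
     | nonneg_vec v].

Definition orth_pos_set n (adj : rel 'I_n) (B : {fset vec n}) : Prop :=
  (forall b, b \in B -> is_pos_root adj b) /\
  (forall b c, b \in B -> c \in B -> b != c -> ip adj b c = 0).

Definition is_orbit n (adj : rel 'I_n) (Bs : {fset vec n} -> Prop) : Prop :=
  exists2 B0, orth_pos_set adj B0 & forall B, Bs B <-> exists w, B = wset adj w B0.

Definition admissible n (adj : rel 'I_n) (Bs : {fset vec n} -> Prop) : Prop :=
  is_orbit adj Bs /\
  forall B, Bs B -> forall i j : 'I_n, ~~ adj i j ->
    forall g, g \in B -> [ffun k => g k - alpha i k + alpha j k] \in B ->
      wset adj [:: i] B = wset adj [:: j] B.

Definition ht n (v : vec n) : int := \sum_(k < n) v k.

Definition prec n (B C : {fset vec n}) : Prop :=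
  B != C /\ C `\` B != fset0 /\
  exists2 b, b \in B `\` C & forall c, c \in C `\` B -> ht b < ht c.

Definition mstep n (adj : rel 'I_n) (Bs : {fset vec n} -> Prop) (B C : {fset vec n}) : Prop :=
  Bs B /\ exists j : 'I_n, C = wset adj [:: j] B /\ prec B C.

Definition mlt n (adj : rel 'I_n) (Bs : {fset vec n} -> Prop) : {fset vec n} -> {fset vec n} -> Prop :=
  clos_trans _ (mstep adj Bs).

Definition in_perp n (adj : rel 'I_n) (B : {fset vec n}) (v : vec n) : Prop :=
  is_root adj v /\ forall b, b \in B -> ip adj v b = 0.

(* Main.v *)
Require Import Defs.
From mathcomp Require Import all_boot all_order all_algebra finmap zify ring.
Import Order.TTheory GRing.Theory Num.Theory.
Set Implicit Arguments. Unset Strict Implicit.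

Section Basic.
Local Open Scope fset_scope.
Local Open Scope ring_scope.
Variable n : nat.
Variable adj : rel 'I_n.
Hypothesis adj_sym : symmetric adj.
Hypothesis adj_irr : irreflexive adj.
Local Notation vec := {ffun 'I_n -> int}.
Local Notation C := (cartan adj).
Local Notation ip := (ip adj).


Lemma cartan_sym i j : C i j = C j i.
Proof. by rewrite /cartan eq_sym adj_sym. Qed.

Lemma cartan_diag i : C i i = 2.
Proof. by rewrite /cartan eqxx. Qed.

Lemma cartan_off i j : i != j -> C i j = if adj i j then -1 else 0.
Proof. by rewrite /cartan => /negbTE ->. Qed.

Lemma cartan_le i j : i != j -> C i j <= 0.
Proof. by move/cartan_off->; case: (adj i j). Qed.

Lemma ipC u v : ip u v = ip v u.
Proof.
rewrite /Defs.ip exchange_big /=; apply: eq_bigr => i _; apply: eq_bigr => j _.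
rewrite (cartan_sym j i); ring.
Qed.

Lemma ipDl u v w : ip (u + v) w = ip u w + ip v w.
Proof.
rewrite /Defs.ip -big_split /=; apply: eq_bigr => i _.
rewrite -big_split /=; apply: eq_bigr => j _; rewrite ffunE; ring.
Qed.

Lemma ipNl u w : ip (- u) w = - ip u w.
Proof.
rewrite /Defs.ip -sumrN; apply: eq_bigr => i _.
rewrite -sumrN; apply: eq_bigr => j _; rewrite ffunE; ring.
Qed.

Lemma ipBl u v w : ip (u - v) w = ip u w - ip v w.
Proof. by rewrite ipDl ipNl. Qed.

Lemma ipDr u v w : ip w (u + v) = ip w u + ip w v.
Proof. by rewrite ipC ipDl !(ipC w). Qed.
Lemma ipNr u w : ip w (- u) = - ip w u.
Proof. by rewrite ipC ipNl ipC. Qed.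
Lemma ipBr u v w : ip w (u - v) = ip w u - ip w v.
Proof. by rewrite ipDr ipNr. Qed.

Lemma ip0l w : ip 0 w = 0.
Proof. by rewrite /Defs.ip big1 // => i _; rewrite big1 // => j _; rewrite ffunE !mul0r. Qed.

Definition scv (c : int) (u : vec) : vec := [ffun m => c * u m].

Lemma ipZl c u w : ip (scv c u) w = c * ip u w.
Proof.
rewrite /Defs.ip mulr_sumr; apply: eq_bigr => i _.
rewrite mulr_sumr; apply: eq_bigr => j _; rewrite ffunE; ring.
Qed.
Lemma ipZr c u w : ip w (scv c u) = c * ip w u.
Proof. by rewrite ipC ipZl ipC. Qed.

Lemma ip_alphar u k : ip u (alpha k) = \sum_(i < n) u i * C i k.
Proof.
rewrite /Defs.ip; apply: eq_bigr => i _.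
rewrite (bigD1 k) //= big1 => [|j /negbTE jk]; last by rewrite !ffunE jk /= mulr0 mul0r.
by rewrite !ffunE eqxx /= mulr1 addr0.
Qed.

Lemma ip_alphal u k : ip (alpha k) u = \sum_(i < n) u i * C i k.
Proof. by rewrite ipC ip_alphar. Qed.

Lemma ip_alpha a b : ip (alpha a) (alpha b) = C a b.
Proof.
rewrite ip_alphar (bigD1 a) //= big1 => [|j /negbTE ja]; last by rewrite !ffunE ja /= mul0r.
by rewrite !ffunE eqxx /= mul1r addr0.
Qed.

Lemma refl_eq k v : refl adj k v = v - scv (ip v (alpha k)) (alpha k).
Proof. by apply/ffunP => m; rewrite !ffunE. Qed.

Lemma ip_refl k u w : ip (refl adj k u) w = ip u w - ip u (alpha k) * ip (alpha k) w.
Proof. by rewrite refl_eq ipBl ipZl. Qed.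

Lemma ip_refl2 k u v : ip (refl adj k u) (refl adj k v) = ip u v.
Proof.
rewrite ip_refl (ipC u) (ipC (alpha k) (refl adj k v)) !ip_refl ip_alpha cartan_diag.
rewrite (ipC (alpha k) u) (ipC v u); ring.
Qed.

Lemma reflK k v : refl adj k (refl adj k v) = v.
Proof.
apply/ffunP => m; rewrite !ffunE ip_refl ip_alpha cartan_diag; ring.
Qed.

Lemma refl_alpha k : refl adj k (alpha k) = - alpha k.
Proof. apply/ffunP => m; rewrite !ffunE ip_alpha cartan_diag; case: (m == k); simpl; ring. Qed.

Lemma htD (u v : vec) : ht (u + v) = ht u + ht v.
Proof. by rewrite /ht -big_split; apply: eq_bigr => i _; rewrite ffunE. Qed.
Lemma htN (u : vec) : ht (- u) = - ht u.
Proof. by rewrite /ht -sumrN; apply: eq_bigr => i _; rewrite ffunE. Qed.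
Lemma htB (u v : vec) : ht (u - v) = ht u - ht v.
Proof. by rewrite htD htN. Qed.
Lemma ht_alpha (k : 'I_n) : ht (alpha k) = 1.
Proof. rewrite /ht (bigD1 k) //= big1 => [|j /negbTE jk]; rewrite !ffunE ?eqxx ?jk //. Qed.
Lemma htZ c (u : vec) : ht (scv c u) = c * ht u.
Proof. by rewrite /ht mulr_sumr; apply: eq_bigr => i _; rewrite ffunE. Qed.
Lemma ht_refl k v : ht (refl adj k v) = ht v - ip v (alpha k).
Proof. by rewrite refl_eq htB htZ ht_alpha mulr1. Qed.

Lemma act_cat w1 w2 v : act adj (w1 ++ w2) v = act adj w1 (act adj w2 v).
Proof. by rewrite /act foldr_cat. Qed.

Lemma ip_act w u v : ip (act adj w u) (act adj w v) = ip u v.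
Proof. by elim: w => //= k w IH; rewrite ip_refl2. Qed.



Local Notation refl := (refl adj).
Local Notation act := (act adj).



Lemma ip_sumL (I : Type) (r : seq I) (g : I -> vec) w :
  ip (\sum_(i <- r) g i) w = \sum_(i <- r) ip (g i) w.
Proof.
elim/big_rec2: _ => [|i y v _ <-]; first exact: ip0l.
by rewrite ipDl.
Qed.

Lemma vec_decomp (v : vec) : v = \sum_(i < n) scv (v i) (alpha i).
Proof.
apply/ffunP => m; rewrite sum_ffunE (bigD1 m) //= big1 => [|j /negbTE jm].
  by rewrite !ffunE eqxx mulr1 addr0.
by rewrite !ffunE eq_sym jm mulr0.
Qed.

Lemma reflD k (u v : vec) : refl k (u + v) = refl k u + refl k v.
Proof. apply/ffunP => m; rewrite !ffunE ipDl; ring. Qed.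
Lemma refl0 k : refl k 0 = 0.
Proof. apply/ffunP => m; rewrite !ffunE ip0l; ring. Qed.
Lemma reflZ k c (u : vec) : refl k (scv c u) = scv c (refl k u).
Proof. apply/ffunP => m; rewrite !ffunE ipZl; ring. Qed.

Lemma refl_sum k (I : Type) (r : seq I) (g : I -> vec) :
  refl k (\sum_(i <- r) g i) = \sum_(i <- r) refl k (g i).
Proof.
elim/big_rec2: _ => [|i y v _ <-]; first exact: refl0.
by rewrite reflD.
Qed.

Lemma act_lincomb w (c : 'I_n -> int) (f : 'I_n -> vec) :
  act w (\sum_(i < n) scv (c i) (f i)) = \sum_(i < n) scv (c i) (act w (f i)).
Proof.
elim: w => //= k w IH; rewrite IH refl_sum; apply: eq_bigr => i _; exact: reflZ.
Qed.

Definition matw (w : seq 'I_n) : {ffun 'I_n -> vec} := [ffun i => act w (alpha i)].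
Definition lin (M : {ffun 'I_n -> vec}) (v : vec) : vec := \sum_(i < n) scv (v i) (M i).

Lemma act_lin w v : act w v = lin (matw w) v.
Proof.
rewrite {1}(vec_decomp v) act_lincomb /lin; apply: eq_bigr => i _; by rewrite ffunE.
Qed.

Lemma linD M (u v : vec) : lin M (u + v) = lin M u + lin M v.
Proof.
rewrite /lin -big_split; apply: eq_bigr => i _ /=; apply/ffunP => m; rewrite !ffunE; ring.
Qed.
Lemma linZ M c (u : vec) : lin M (scv c u) = scv c (lin M u).
Proof.
apply/ffunP => m; rewrite /lin [RHS]ffunE !sum_ffunE mulr_sumr; apply: eq_bigr => i _.
rewrite !ffunE; ring.
Qed.
Lemma linN M (u : vec) : lin M (- u) = - lin M u.
Proof.
apply/ffunP => m; rewrite /lin [RHS]ffunE !sum_ffunE -sumrN; apply: eq_bigr => i _.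
rewrite !ffunE; ring.
Qed.

Definition vdot (u v : vec) : int := \sum_(i < n) u i * v i.

Lemma vdotC u v : vdot u v = vdot v u.
Proof. by apply: eq_bigr => i _; rewrite mulrC. Qed.
Lemma vdotDl u v w : vdot (u + v) w = vdot u w + vdot v w.
Proof. rewrite /vdot -big_split /=; apply: eq_bigr => i _; rewrite ffunE; ring. Qed.
Lemma vdotNl u w : vdot (- u) w = - vdot u w.
Proof. rewrite /vdot -sumrN; apply: eq_bigr => i _; rewrite ffunE; ring. Qed.
Lemma vdotZl c u w : vdot (scv c u) w = c * vdot u w.
Proof. rewrite /vdot mulr_sumr; apply: eq_bigr => i _; rewrite ffunE; ring. Qed.
Lemma vdot_ge0 u : 0 <= vdot u u.
Proof. by apply: sumr_ge0 => i _; rewrite -expr2 sqr_ge0. Qed.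
Lemma vdot_gt0 u : u != 0 -> 0 < vdot u u.
Proof.
move=> u0; have [m um] : exists m, u m != 0.
  apply/existsP; apply: contraR u0 => /existsPn H; apply/eqP/ffunP => m.
  by move: (H m); rewrite negbK ffunE => /eqP.
rewrite /vdot (bigD1 m) //=; apply: ltr_wpDr.
  by apply: sumr_ge0 => i _; rewrite -expr2 sqr_ge0.
have : 0 < u m * u m by rewrite -expr2 exprn_even_gt0 //= um orbT.
done.
Qed.

Variable s : seq (seq 'I_n).
Hypothesis sph : forall w : seq 'I_n, exists2 w', w' \in s & forall v, act w v = act w' v.

Definition Ms := undup [seq matw w | w <- s].

Lemma matw_in w : matw w \in Ms.
Proof.
have [w' w's H] := sph w; rewrite mem_undup.
have -> : matw w = matw w' by apply/ffunP => i; rewrite !ffunE H.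
exact: map_f.
Qed.

Lemma Ms_inv M : M \in Ms -> exists w, M = matw w.
Proof. by rewrite mem_undup => /mapP [w _ ->]; exists w. Qed.

Definition Q (u v : vec) : int := \sum_(M <- Ms) vdot (lin M u) (lin M v).

Lemma QC u v : Q u v = Q v u.
Proof. by apply: eq_bigr => M _; rewrite vdotC. Qed.
Lemma QDl u v w : Q (u + v) w = Q u w + Q v w.
Proof. rewrite /Q -big_split; apply: eq_bigr => M _; by rewrite linD vdotDl. Qed.
Lemma QNl u w : Q (- u) w = - Q u w.
Proof. rewrite /Q -sumrN; apply: eq_bigr => M _; by rewrite linN vdotNl. Qed.
Lemma QZl c u w : Q (scv c u) w = c * Q u w.
Proof. rewrite /Q mulr_sumr; apply: eq_bigr => M _; by rewrite linZ vdotZl. Qed.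
Lemma Q0l w : Q 0 w = 0.
Proof. by rewrite -(subrr (0 : vec)) QDl QNl subrr. Qed.
Lemma Q_sumL (r : seq 'I_n) (g : 'I_n -> vec) w :
  Q (\sum_(i <- r) g i) w = \sum_(i <- r) Q (g i) w.
Proof.
elim/big_rec2: _ => [|i y v _ <-]; first exact: Q0l.
by rewrite QDl.
Qed.
Lemma Q_ge0 u : 0 <= Q u u.
Proof. by apply: sumr_ge0 => M _; exact: vdot_ge0. Qed.
Lemma Q_gt0 u : u != 0 -> 0 < Q u u.
Proof.
move=> u0; rewrite /Q (bigD1_seq (matw [::])) ?undup_uniq ?matw_in //=.
apply: ltr_wpDr; first by apply: sumr_ge0 => M _; exact: vdot_ge0.
by rewrite -!act_lin /=; exact: vdot_gt0.
Qed.

Section Inv.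
Variable k : 'I_n.
Definition phi (M : {ffun 'I_n -> vec}) : {ffun 'I_n -> vec} :=
  [ffun i => lin M (refl k (alpha i))].

Lemma phi_matw w : phi (matw w) = matw (w ++ [:: k]).
Proof. by apply/ffunP => i; rewrite !ffunE -act_lin act_cat. Qed.

Lemma phiK M : M \in Ms -> phi (phi M) = M.
Proof.
move/Ms_inv => [w ->]; rewrite !phi_matw -catA /=.
by apply/ffunP => i; rewrite !ffunE act_cat /= reflK.
Qed.

Lemma phi_in M : M \in Ms -> phi M \in Ms.
Proof. by move/Ms_inv => [w ->]; rewrite phi_matw matw_in. Qed.

Lemma lin_phi M u : M \in Ms -> lin (phi M) u = lin M (refl k u).
Proof.
move/Ms_inv => [w ->]; by rewrite phi_matw -!act_lin act_cat.
Qed.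

Lemma perm_phi : perm_eq [seq phi M | M <- Ms] Ms.
Proof.
apply: uniq_perm; last first.
- move=> M; apply/mapP/idP => [[M' M'in ->]|Min]; first exact: phi_in.
  by exists (phi M); [exact: phi_in | rewrite phiK].
- exact: undup_uniq.
- rewrite map_inj_in_uniq ?undup_uniq // => M1 M2 H1 H2 E.
  by rewrite -(phiK H1) E phiK.
Qed.

Lemma Q_refl u v : Q (refl k u) (refl k v) = Q u v.
Proof.
rewrite /Q; transitivity (\sum_(M <- [seq phi M | M <- Ms]) vdot (lin M u) (lin M v)); last exact: perm_big perm_phi.
rewrite big_map !big_seq; by apply: eq_bigr => M Min; rewrite !lin_phi.
Qed.

Lemma Q_alpha v : 2 * Q v (alpha k) = ip v (alpha k) * Q (alpha k) (alpha k).
Proof.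
have E : Q v (alpha k) = Q (refl k v) (refl k (alpha k)) by rewrite Q_refl.
have QNr a b : Q a (- b) = - Q a b by rewrite QC QNl QC.
rewrite refl_alpha refl_eq QNr QDl QNl QZl in E.
lia.
Qed.
End Inv.

Lemma key (p : vec) : nonneg_vec p -> p != 0 ->
  exists k, 1 <= p k /\ 1 <= ip p (alpha k).
Proof.
move=> /forallP pnn p0.
case: (boolP [exists k, (1 <= p k) && (1 <= ip p (alpha k))]).
  by move/existsP => [k /andP [H1 H2]]; exists k.
move/existsPn => H; exfalso.
have H2 : 2 * Q p p <= 0.
  rewrite {1}(vec_decomp p) Q_sumL big_distrr /=.
  apply: sumr_le0 => k _; rewrite QZl QC.
  have E := Q_alpha k p; have Hq := Q_ge0 (alpha k).
  have Hk : p k * ip p (alpha k) <= 0.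
    move: (H k) (pnn k); rewrite negb_and -!ltNge; case/orP => h1 h2.
      have pk0 : p k = 0 by lia.
      by rewrite pk0 mul0r.
    by apply: mulr_ge0_le0 => //; lia.
  have -> : 2 * (p k * Q p (alpha k)) = p k * ip p (alpha k) * Q (alpha k) (alpha k).
    by rewrite mulrCA E mulrA.
  by apply: mulr_le0_ge0.
have := Q_gt0 p0; lia.
Qed.

Lemma nonneg_ht_ge0 (p : vec) : nonneg_vec p -> 0 <= ht p.
Proof. by move/forallP => H; apply: sumr_ge0 => i _. Qed.

Lemma ht_ge_coord (p : vec) k : nonneg_vec p -> p k <= ht p.
Proof.
move/forallP => H; rewrite /ht (bigD1 k) //= lerDl.
by apply: sumr_ge0 => i _.
Qed.

Lemma cone_pd_aux (N : nat) (p : vec) : nonneg_vec p -> ht p <= N%:Z -> p != 0 -> 2 <= ip p p.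
Proof.
elim: N p => [|N IH] p pnn hp p0; have [k [pk ek]] := key pnn p0;
  have := ht_ge_coord k pnn.
  lia.
move=> hk; rewrite leNgt; apply/negP => Hlt.
set a := p - alpha k.
have ann : nonneg_vec a.
  apply/forallP => m; rewrite !ffunE; move/forallP: pnn => /(_ m).
  case: (eqVneq m k) => [->|_] /=; lia.
have Eaa : ip a a = ip p p - 2 * ip p (alpha k) + 2.
  rewrite /a !(ipBl, ipBr) ip_alpha cartan_diag (ipC (alpha k) p); ring.
have hta : ht a <= N%:Z by rewrite /a htB ht_alpha; lia.
case: (eqVneq a 0) => [a0|a0].
  have : p = alpha k by apply/eqP; rewrite -subr_eq0 -/a a0.
  move=> pk'; move: Hlt; rewrite pk' ip_alpha cartan_diag //.
have := IH a ann hta a0; lia.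
Qed.

Lemma cone_pd (p : vec) : nonneg_vec p -> p != 0 -> 2 <= ip p p.
Proof.
move=> pnn p0; have h0 := nonneg_ht_ge0 pnn.
apply: (@cone_pd_aux `|ht p|%N) => //.
by rewrite gez0_abs.
Qed.

Definition vpos (v : vec) : vec := [ffun i => if 0 <= v i then v i else 0].
Definition vneg (v : vec) : vec := [ffun i => if 0 <= v i then 0 else - v i].

Lemma vpos_neg v : v = vpos v - vneg v.
Proof. apply/ffunP => i; rewrite !ffunE; case: ifP => _; ring. Qed.

Lemma vpos_nn v : nonneg_vec (vpos v).
Proof. by apply/forallP => i; rewrite ffunE; case: ifP. Qed.
Lemma vneg_nn v : nonneg_vec (vneg v).
Proof. apply/forallP => i; rewrite ffunE; case: ifP => // /negbT; rewrite -ltNge; lia. Qed.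

Lemma ip_posneg v : ip (vpos v) (vneg v) <= 0.
Proof.
apply: sumr_le0 => i _; apply: sumr_le0 => j _.
case: (eqVneq i j) => [<-|ij].
  by rewrite !ffunE; case: ifP => _; rewrite !(mul0r, mulr0).
have h1 : 0 <= vpos v i by move/forallP: (vpos_nn v).
have h2 : 0 <= vneg v j by move/forallP: (vneg_nn v).
exact: (mulr_ge0_le0 (mulr_ge0 h1 h2) (cartan_le ij)).
Qed.

Lemma ip_decomp v : ip v v = ip (vpos v) (vpos v) + ip (vneg v) (vneg v) - 2 * ip (vpos v) (vneg v).
Proof.
rewrite {1 2}(vpos_neg v) !(ipBl, ipBr) (ipC (vneg v) (vpos v)); ring.
Qed.

Lemma cone_ge0 (p : vec) : nonneg_vec p -> 0 <= ip p p.
Proof. move=> pnn; case: (eqVneq p 0) => [->|p0]; first by rewrite ip0l. by have := cone_pd pnn p0; lia. Qed.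

Lemma ip_ge0 v : 0 <= ip v v.
Proof.
rewrite ip_decomp; have := ip_posneg v; have := cone_ge0 (vpos_nn v); have := cone_ge0 (vneg_nn v); lia.
Qed.

Lemma pd v : v != 0 -> 2 <= ip v v.
Proof.
move=> v0; rewrite ip_decomp; have := ip_posneg v.
have := cone_ge0 (vpos_nn v); have := cone_ge0 (vneg_nn v).
case: (eqVneq (vpos v) 0) => [p0|p0]; last by have := cone_pd (vpos_nn v) p0; lia.
case: (eqVneq (vneg v) 0) => [n0|n0]; last by have := cone_pd (vneg_nn v) n0; lia.
by move: v0; rewrite (vpos_neg v) p0 n0 subrr eqxx.
Qed.

Lemma pd0 v : ip v v = 0 -> v = 0.
Proof. move=> h; case: (eqVneq v 0) => // /pd; lia. Qed.

Lemma sign_coh v : ip v v = 2 -> nonneg_vec v \/ nonneg_vec (- v).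
Proof.
move=> h; have := ip_decomp v; rewrite h; have := ip_posneg v.
case: (eqVneq (vpos v) 0) => [p0|p0].
  move=> _ _; right; rewrite (vpos_neg v) p0 sub0r opprK; exact: vneg_nn.
case: (eqVneq (vneg v) 0) => [n0|n0].
  move=> _ _; left; rewrite (vpos_neg v) n0 subr0; exact: vpos_nn.
have := cone_pd (vpos_nn v) p0; have := cone_pd (vneg_nn v) n0; lia.
Qed.


Lemma nonneg_ht_pos (p : vec) : nonneg_vec p -> p != 0 -> 1 <= ht p.
Proof.
move=> pnn p0; have [k m0] : exists k, p k != 0.
  apply/existsP; apply: contraR p0 => /existsPn H; apply/eqP/ffunP => m.
  by move: (H m); rewrite negbK ffunE => /eqP.
have := ht_ge_coord k pnn; move/forallP: pnn => /(_ k); move: m0 => /eqP; lia.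
Qed.

Lemma nonneg_ht0 (p : vec) : nonneg_vec p -> ht p = 0 -> p = 0.
Proof. move=> pnn h; case: (eqVneq p 0) => // p0; have := nonneg_ht_pos pnn p0; lia. Qed.

Lemma nrm2_neq0 (v : vec) : ip v v = 2 -> v != 0.
Proof. by move=> h; apply/eqP => v0; move: h; rewrite v0 ip0l. Qed.

Lemma nrm2_ht (v : vec) : ip v v = 2 -> ht v != 0.
Proof.
move=> h; have v0 := nrm2_neq0 h; case: (sign_coh h) => H.
  by have := nonneg_ht_pos H v0; lia.
have : - v != 0 by rewrite oppr_eq0.
by move/(nonneg_ht_pos H); rewrite htN; lia.
Qed.

Lemma nrm2_ip_le (v : vec) k : ip v v = 2 -> ip v (alpha k) <= 2.
Proof.
move=> h; have := ip_ge0 (v - alpha k); rewrite !(ipBl, ipBr) ip_alpha cartan_diag (ipC (alpha k) v); lia.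
Qed.

Lemma nrm2_ip_eq2 (v : vec) k : ip v v = 2 -> ip v (alpha k) = 2 -> v = alpha k.
Proof.
move=> h e; apply/eqP; rewrite -subr_eq0; apply/eqP/pd0.
rewrite !(ipBl, ipBr) ip_alpha cartan_diag (ipC (alpha k) v); lia.
Qed.

Lemma nrm2_ip_ge (v : vec) k : ip v v = 2 -> -2 <= ip v (alpha k).
Proof.
move=> h; have := ip_ge0 (v + alpha k); rewrite !(ipDl, ipDr) ip_alpha cartan_diag (ipC (alpha k) v); lia.
Qed.

Lemma nrm2_ip_eqN2 (v : vec) k : ip v v = 2 -> ip v (alpha k) = -2 -> v = - alpha k.
Proof.
move=> h e; apply/eqP; rewrite -subr_eq0 opprK; apply/eqP/pd0.
rewrite !(ipDl, ipDr) ip_alpha cartan_diag (ipC (alpha k) v); lia.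
Qed.

Lemma alpha_nonneg (k : 'I_n) : nonneg_vec (alpha k).
Proof. by apply/forallP => m; rewrite ffunE; case: (m == k). Qed.

Lemma nalpha_not_nonneg (k : 'I_n) : ~~ nonneg_vec (- alpha k).
Proof. apply/forallP => /(_ k); rewrite !ffunE eqxx. by []. Qed.

Lemma eps_vals (x : vec) k : nonneg_vec x -> ip x x = 2 -> x != alpha k ->
  ip x (alpha k) = -1 \/ ip x (alpha k) = 0 \/ ip x (alpha k) = 1.
Proof.
move=> xnn h xa; have h1 := nrm2_ip_le k h; have h2 := nrm2_ip_ge k h.
have h3 : ip x (alpha k) != 2 by apply: contra xa => /eqP e; apply/eqP/nrm2_ip_eq2.
have h4 : ip x (alpha k) != -2.
  apply/negP => /eqP e; move: xnn; rewrite (nrm2_ip_eqN2 h e).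
  by move/negP: (nalpha_not_nonneg k).
move: h3 h4 => /eqP h3 /eqP h4; lia.
Qed.

Lemma ht1_alpha (v : vec) : ip v v = 2 -> ht v = 1 -> exists t, v = alpha t.
Proof.
move=> h h1; have v0 := nrm2_neq0 h.
have vnn : nonneg_vec v.
  case: (sign_coh h) => // H; have : - v != 0 by rewrite oppr_eq0.
  by move/(nonneg_ht_pos H); rewrite htN; lia.
have [t m0] : exists t, v t != 0.
  apply/existsP; apply: contraR v0 => /existsPn H; apply/eqP/ffunP => m.
  by move: (H m); rewrite negbK ffunE => /eqP.
exists t; apply/eqP; rewrite -subr_eq0; apply/eqP/nonneg_ht0; last by rewrite htB ht_alpha h1 subrr.
apply/forallP => m; rewrite !ffunE; move/forallP: vnn => vnn.
have := vnn m; case: (eqVneq m t) => [->|_] /=; last by rewrite subr0.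
by move: m0 => /eqP; lia.
Qed.

Lemma cartan_vals a b : C a b = 2 /\ a = b \/ C a b = -1 /\ adj a b \/ C a b = 0 /\ a != b /\ ~~ adj a b.
Proof.
case: (eqVneq a b) => [<-|ab]; first by left; rewrite cartan_diag.
rewrite cartan_off //; case: (boolP (adj a b)) => H; [right; left | right; right]; by [].
Qed.

Lemma refl_pos (x : vec) k : nonneg_vec x -> ip x x = 2 -> x != alpha k ->
  nonneg_vec (refl k x).
Proof.
move=> xnn h xa.
have hr : ip (refl k x) (refl k x) = 2 by rewrite ip_refl2.
case: (sign_coh hr) => // H; exfalso.
have /existsP [m /andP [mk xm]] : [exists m, (m != k) && (0 < x m)].
  rewrite -[X in is_true X]negbK negb_exists; apply/negP => /forallP Hall.
  have E : x = scv (x k) (alpha k).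
    apply/ffunP => m; rewrite !ffunE; case: (eqVneq m k) => [->|mk]; first by rewrite mulr1.
    move/forallP: xnn => /(_ m); have := Hall m; rewrite mk /= mulr0; lia.
  have : ip x x = x k * x k * 2 by rewrite {1 2}E ipZl ipZr ip_alpha cartan_diag mulrA.
  rewrite h => E2.
  have xk1 : x k = 1 \/ x k = -1 by nia.
  move/forallP: xnn => /(_ k); case: xk1 => e; last lia.
  move=> _; move/negP: xa; apply; rewrite E e; apply/eqP/ffunP => m'; by rewrite !ffunE mul1r.
move/forallP: H => /(_ m); rewrite !ffunE (negbTE mk) mulr0 subr0; lia.
Qed.


Definition good (X : {fset vec}) := forall x, x \in X ->
  nonneg_vec x /\ ip x x = 2 /\ (forall y, y \in X -> x != y -> ip x y = 0).

Definition posv (v : vec) : vec := if nonneg_vec v then v else - v.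

Lemma nonneg_both (v : vec) : nonneg_vec v -> nonneg_vec (- v) -> v = 0.
Proof.
move=> /forallP h1 /forallP h2; apply/ffunP => m; have := h1 m; have := h2 m; rewrite !ffunE => a b; apply/eqP; rewrite eq_le b andbT -oppr_ge0; exact: a.
Qed.


Lemma posv_nonneg v : ip v v = 2 -> nonneg_vec (posv v).
Proof. rewrite /posv => h; case: ifP => // /negbT H; by case: (sign_coh h) => // H'; rewrite H' in H. Qed.

Lemma posv_eq v : nonneg_vec v -> posv v = v.
Proof. by rewrite /posv => ->. Qed.

Lemma posv_pm v : posv v = v \/ posv v = - v.
Proof. by rewrite /posv; case: ifP; [left|right]. Qed.

Lemma posvN v : ip v v = 2 -> posv (- v) = posv v.
Proof.
move=> h; rewrite /posv; case: (boolP (nonneg_vec v)) => H.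
  case: (boolP (nonneg_vec (- v))) => H'; last by rewrite opprK.
  by have := nonneg_both H H'; move/eqP; rewrite (negbTE (nrm2_neq0 h)).
case: (sign_coh h) => H2; first by rewrite H2 in H.
by rewrite H2.
Qed.

Lemma ip_posv v : ip (posv v) (posv v) = ip v v.
Proof. by case: (posv_pm v) => ->; rewrite ?ipNl ?ipNr ?opprK. Qed.

Lemma ip_posv2 u v : ip u v = 0 -> ip (posv u) (posv v) = 0.
Proof. by move=> h; case: (posv_pm u) => ->; case: (posv_pm v) => ->; rewrite ?ipNl ?ipNr h ?oppr0. Qed.

Lemma reflN k (v : vec) : refl k (- v) = - refl k v.
Proof. apply/ffunP => m; rewrite !ffunE ipNl; ring. Qed.

Lemma actN w (v : vec) : act w (- v) = - act w v.
Proof. by elim: w => //= k w ->; rewrite reflN. Qed.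

Lemma ffun_opp (v : vec) : [ffun k => - v k] = - v.
Proof. by apply/ffunP => m; rewrite !ffunE. Qed.

Lemma wset_good w X : good X -> wset adj w X = [fset posv (act w x) | x in X].
Proof.
move=> gX; apply/fsetP => u; rewrite !inE.
apply/idP/imfsetP.
  move=> /andP [/orP [/imfsetP [b bX ->] | /imfsetP [b bX ->]] unn]; exists b => //.
    by rewrite posv_eq.
  have [_ [hb _]] := gX b bX.
  rewrite ffun_opp in unn *; rewrite -posvN ?ip_act // posv_eq //.
move=> [b bX ->]; have [_ [hb _]] := gX b bX.
rewrite posv_nonneg ?ip_act // andbT.
case: (posv_pm (act w b)) => ->; apply/orP; [left | right]; apply/imfsetP; exists b => //.
Qed.

Lemma good_wset w X : good X -> good (wset adj w X).
Proof.
move=> gX; rewrite wset_good // => u /imfsetP [x xX ->].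
have [xnn [hx ox]] := gX x xX.
split; first by apply: posv_nonneg; rewrite ip_act.
split; first by rewrite ip_posv ip_act.
move=> v /imfsetP [y yX ->] ne; apply: ip_posv2; rewrite ip_act; apply: ox => //.
by apply: contra ne => /eqP ->.
Qed.

Lemma posv_act u z : ip z z = 2 -> posv (act u (posv z)) = posv (act u z).
Proof.
move=> h; case: (posv_pm z) => -> //; rewrite actN posvN // ip_act //.
Qed.

Lemma wset_cat u v X : good X -> wset adj u (wset adj v X) = wset adj (u ++ v) X.
Proof.
move=> gX; rewrite (wset_good _ (good_wset (w:=v) gX)) !wset_good //.
apply/fsetP => y; apply/imfsetP/imfsetP.
  move=> [z /imfsetP [x xX ->] ->]; exists x => //.
  have [_ [hx _]] := gX x xX; by rewrite posv_act ?ip_act // act_cat.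
move=> [x xX ->]; exists (posv (act v x)); first by apply/imfsetP; exists x.
have [_ [hx _]] := gX x xX; by rewrite posv_act ?ip_act // act_cat.
Qed.

Lemma wset_nil X : good X -> wset adj [::] X = X.
Proof.
move=> gX; rewrite wset_good //; apply/fsetP => y; apply/imfsetP/idP.
  by move=> [x xX ->] /=; have [xnn _] := gX x xX; rewrite posv_eq.
by move=> yX; exists y => //=; have [ynn _] := gX y yX; rewrite posv_eq.
Qed.

Lemma wset_fix k X : good X -> (alpha k \in X \/ forall x, x \in X -> ip x (alpha k) = 0) ->
  wset adj [:: k] X = X.
Proof.
move=> gX H; rewrite wset_good //; apply/fsetP => y.
have E : forall x, x \in X -> posv (refl k x) = x.
  move=> x xX; have [xnn [hx ox]] := gX x xX.
  case: (eqVneq x (alpha k)) => [->|xa].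
    by rewrite refl_alpha posvN ?ip_alpha ?cartan_diag // posv_eq // alpha_nonneg.
  have e0 : ip x (alpha k) = 0.
    case: H => [aX|//]; last by apply.
    by apply: ox.
  rewrite refl_eq e0 posv_eq; last by apply/forallP => m; rewrite !ffunE mul0r subr0; move/forallP: xnn.
  by apply/ffunP => m; rewrite !ffunE mul0r subr0.
apply/imfsetP/idP => [[x xX ->] /=|yX]; first by rewrite E.
by exists y => //=; rewrite E.
Qed.

Lemma wset_img k X : good X -> alpha k \notin X -> wset adj [:: k] X = [fset refl k x | x in X].
Proof.
move=> gX aX; rewrite wset_good //; apply/fsetP => y.
have E : forall x, x \in X -> posv (refl k x) = refl k x.
  move=> x xX; have [xnn [hx ox]] := gX x xX; apply: posv_eq; apply: refl_pos => //.
  by apply: contra aX => /eqP <-.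
apply/imfsetP/imfsetP => [[x xX ->]|[x xX ->]]; exists x => //=; by rewrite E.
Qed.


Lemma seq_min (T : eqType) (l : seq T) (f : T -> int) (x0 : T) : x0 \in l ->
  exists2 x, x \in l & forall y, y \in l -> f x <= f y.
Proof.
elim: l x0 => // a l IH x0; rewrite inE => _.
case: (boolP (has (fun y => f y < f a) l)) => [/hasP [y yl _]|/hasPn H].
  have [x xl Hx] := IH y yl; case: (lerP (f x) (f a)) => fxa.
    exists x; first by rewrite inE xl orbT.
    by move=> z; rewrite inE => /orP [/eqP ->|]; [|apply: Hx].
  exists a; first by rewrite inE eqxx.
  move=> z; rewrite inE => /orP [/eqP ->//|zl]; have := Hx z zl; lia.
exists a; first by rewrite inE eqxx.
by move=> z; rewrite inE => /orP [/eqP ->//|zl]; have := H z zl; rewrite -leNgt.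
Qed.

Lemma fset_min (A : {fset vec}) (f : vec -> int) x0 : x0 \in A ->
  exists2 x, x \in A & forall y, y \in A -> f x <= f y.
Proof. exact: seq_min. Qed.

Definition cnt (X : {fset vec}) (h : int) : nat := #|` [fset x in X | ht x == h]|.

Definition LX (X Y : {fset vec}) : Prop :=
  exists s, (forall h, h < s -> cnt X h = cnt Y h) /\ (cnt Y s < cnt X s)%N.

Lemma prec_LX X Y : prec X Y -> LX X Y.
Proof.
move=> [_ [_ [b bXY Hb]]].
have [m mXY Hm] := fset_min (@ht n) bXY.
have hmb := Hm b bXY.
exists (ht m); split.
  move=> h hh; congr (#|` _|); apply/fsetP => x; rewrite !inE.
  case: (eqVneq (ht x) h) => [hx|]; rewrite ?andbF //= !andbT.
  apply/idP/idP => xin.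
    apply/negPn/negP => xY; have := Hm x; rewrite !inE xY xin => /(_ isT); lia.
  apply/negPn/negP => xX; have := Hb x; rewrite !inE xX xin => /(_ isT); lia.
apply: fproper_ltn_card; rewrite fproperE; apply/andP; split.
  apply/fsubsetP => x; rewrite !inE => /andP [xY /eqP hx]; rewrite hx eqxx andbT.
  apply/negPn/negP => xX; have := Hb x; rewrite !inE xX xY => /(_ isT); lia.
apply/negP => /fsubsetP /(_ m); rewrite !inE eqxx andbT.
move: mXY; rewrite !inE => /andP [mY mX]; rewrite mX => /(_ isT) /andP [].
by rewrite (negbTE mY).
Qed.

Lemma LX_trans X Y Z : LX X Y -> LX Y Z -> LX X Z.
Proof.
move=> [s1 [E1 L1]] [s2 [E2 L2]].
case: (ltgtP s1 s2) => h12.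
- exists s1; split; last by rewrite -E2.
  move=> h hh; rewrite E1 ?E2 //; exact: lt_trans hh h12.
- exists s2; split; last by rewrite E1.
  move=> h hh; rewrite E1 ?E2 //; exact: lt_trans hh h12.
- exists s1; split; last by rewrite h12 in L1 *; exact: ltn_trans L2 L1.
  move=> h hh; rewrite E1 ?E2 //; by rewrite -h12.
Qed.

Lemma LX_irr X : ~ LX X X.
Proof. by move=> [s0 [_ L]]; rewrite ltnn in L. Qed.


Local Notation eps k x := (ip x (alpha k)).
Definition R k X := wset adj [:: k] X.

Definition Dn k (X : {fset vec}) := alpha k \notin X /\
  exists2 x, x \in X & eps k x != 0 /\ forall y, y \in X -> eps k y != 0 -> ht x - eps k x < ht y.
Definition Up k (X : {fset vec}) := alpha k \notin X /\
  exists2 y, y \in X & eps k y != 0 /\ forall x, x \in X -> eps k x != 0 -> ht y < ht x - eps k x.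

Lemma refl_fixed k (x : vec) : eps k x = 0 -> refl k x = x.
Proof. by move=> e; apply/ffunP => m; rewrite !ffunE e mul0r subr0. Qed.

Lemma eps_refl k (x : vec) : eps k (refl k x) = - eps k x.
Proof. by rewrite ip_refl ip_alpha cartan_diag; ring. Qed.

Lemma refl_neq k (x : vec) : eps k x != 0 -> refl k x != x.
Proof.
move=> e; apply/negP => /eqP /ffunP /(_ k); rewrite !ffunE eqxx mulr1 => h.
move: h => /eqP; rewrite -{2}(subr0 (x k)) (inj_eq (addrI _)) eqr_opp => /eqP h0.
by rewrite h0 eqxx in e.
Qed.

Section GoodX.
Variable X : {fset vec}.
Hypothesis gX : good X.

Lemma gX_nn x : x \in X -> nonneg_vec x.
Proof. by move/gX => [->]. Qed.
Lemma gX_n2 x : x \in X -> ip x x = 2.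
Proof. by move/gX => [_ []]. Qed.
Lemma gX_orth x y : x \in X -> y \in X -> x != y -> ip x y = 0.
Proof. by move/gX => [_ [_ H]]; apply: H. Qed.

Lemma gX_eps k x : alpha k \notin X -> x \in X -> eps k x = -1 \/ eps k x = 0 \/ eps k x = 1.
Proof.
move=> aX xX; apply: eps_vals; [exact: gX_nn | exact: gX_n2|].
by apply: contra aX => /eqP <-.
Qed.

Lemma M1 k x : alpha k \notin X -> x \in X -> eps k x != 0 -> x \notin R k X.
Proof.
move=> aX xX e; rewrite /R wset_img //; apply/imfsetP => [[x' x'X E]].
case: (eqVneq x x') => [xx'|ne].
  by move: E (refl_neq e); rewrite -xx' => <-; rewrite eqxx.
have o := gX_orth xX x'X ne.
have e' : eps k x' = - eps k x by rewrite E eps_refl opprK.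
have := gX_eps aX x'X; move: o e e'; rewrite E ip_refl gX_n2 // (ipC (alpha k)) => o /eqP e e'.
lia.
Qed.

Lemma M2 k x : alpha k \notin X -> x \in X -> eps k x = 0 -> x \in R k X.
Proof.
move=> aX xX e; rewrite /R wset_img //; apply/imfsetP; exists x => //.
by rewrite refl_fixed.
Qed.

Lemma M3 k x : alpha k \notin X -> x \in X -> eps k x != 0 -> refl k x \notin X.
Proof.
move=> aX xX e; apply/negP => rX.
have ne : refl k x != x := refl_neq e.
have o := gX_orth rX xX ne.
have := gX_eps aX xX; move: o e; rewrite ip_refl gX_n2 // (ipC (alpha k)) => o /eqP e.
lia.
Qed.

Lemma ht_refl' k (x : vec) : ht (refl k x) = ht x - eps k x.
Proof. exact: ht_refl. Qed.

Lemma Dn_prec k : Dn k X -> prec (R k X) X.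
Proof.
move=> [aX [x xX [e H]]].
have xR := M1 aX xX e.
split; first by apply/negP => /eqP E; move: xR; rewrite E xX.
split; first by apply/eqP => /fsetP /(_ x); rewrite ?in_fsetD ?in_fset0 xR xX.
exists (refl k x).
  by rewrite ?in_fsetD ?in_fset0 (M3 aX xX e) /R wset_img //; apply/imfsetP; exists x.
move=> c; rewrite ?in_fsetD ?in_fset0 => /andP [cR cX]; rewrite ht_refl'; apply: H => //.
by apply: contra cR => /eqP e0; apply: M2.
Qed.

Lemma Up_prec k : Up k X -> prec X (R k X).
Proof.
move=> [aX [y yX [e H]]].
have yR := M1 aX yX e.
split; first by apply/negP => /eqP E; move: yR; rewrite -E yX.
split.
  apply/eqP => /fsetP /(_ (refl k y)); rewrite ?in_fsetD ?in_fset0 (M3 aX yX e) /R wset_img //=.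
  by move/negbT => /imfsetP; apply; exists y.
exists y; first by rewrite ?in_fsetD ?in_fset0 yR yX.
move=> c; rewrite ?in_fsetD ?in_fset0 => /andP [cX cR]; move: cR cX; rewrite /R wset_img // => /imfsetP [x xX ->] cX.
have e' : eps k x != 0 by apply: contra cX => /eqP e0; rewrite refl_fixed.
by rewrite ht_refl'; apply: H.
Qed.

Lemma tie k x y : alpha k \notin X -> x \in X -> y \in X -> eps k x = 1 -> eps k y = -1 ->
  ht x = ht y + 1 -> False.
Proof.
move=> aX xX yX ex ey hxy.
have ne : x != y by apply/negP => /eqP E; move: ex; rewrite E ey.
have o := gX_orth xX yX ne.
set v := y - refl k x.
have h1 : ip y (refl k x) = 1.
  by rewrite ipC ip_refl o ex (ipC (alpha k)) ey.
have hv : ip v v = 2.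
  rewrite /v !(ipBl, ipBr) ip_refl2 (ipC (refl k x) y) h1 !gX_n2 //; ring.
have := nrm2_ht hv; rewrite /v htB ht_refl' hxy ex; lia.
Qed.

Lemma trich k : R k X = X \/ Dn k X \/ Up k X.
Proof.
case: (boolP (alpha k \in X)) => aX; first by left; apply: wset_fix; [|left].
case: (boolP [exists x : X, eps k (val x) != 0]) => [/existsP [[x0 x0X] /= e0]|/existsPn H]; last first.
  left; apply: wset_fix => //; right => x xX; have := H [` xX]; rewrite negbK /= => /eqP //.
right.
pose S := [fset x in X | eps k x != 0].
have x0S : x0 \in S by rewrite !inE x0X e0.
have [x1 x1S Hx1] := fset_min (fun x => ht x - eps k x) x0S.
have [y1 y1S Hy1] := fset_min (@ht n) x0S.
move: x1S y1S; rewrite !inE => /andP [x1X e1] /andP [y1X f1].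
have HS : forall z, z \in X -> eps k z != 0 -> z \in S by move=> z zX ez; rewrite !inE zX ez.
case: (boolP [forall y : X, (eps k (val y) != 0) ==> (ht x1 - eps k x1 < ht (val y))]) => [/forallP H1|/forallP H1].
  left; split => //; exists x1 => //; split => // y yX ey.
  by have := H1 [` yX]; rewrite /= ey.
case: (boolP [forall x : X, (eps k (val x) != 0) ==> (ht y1 < ht (val x) - eps k (val x))]) => [/forallP H2|/forallP H2].
  right; split => //; exists y1 => //; split => // x xX ex.
  by have := H2 [` xX]; rewrite /= ex.
exfalso.
have /existsP [[y2 y2X] /=] : [exists y : X, ~~ ((eps k (val y) != 0) ==> (ht x1 - eps k x1 < ht (val y)))].
  by rewrite -negb_forall; apply/forallP.
rewrite negb_imply -leNgt => /andP [f2 hy2].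
have /existsP [[x2 x2X] /=] : [exists x : X, ~~ ((eps k (val x) != 0) ==> (ht y1 < ht (val x) - eps k (val x)))].
  by rewrite -negb_forall; apply/forallP.
rewrite negb_imply -leNgt => /andP [e2 hx2].
have a1 := Hx1 x2 (HS _ x2X e2).
have a2 := Hy1 y2 (HS _ y2X f2).
have a3 := Hx1 y1 (HS _ y1X f1).
have a4 := Hy1 x1 (HS _ x1X e1).
have v1 := gX_eps aX x1X; have v2 := gX_eps aX y1X.
move: e1 f1 => /eqP e1 /eqP f1.
have ex1 : eps k x1 = 1 by lia.
have ey1 : eps k y1 = -1 by lia.
apply: (tie aX x1X y1X ex1 ey1); lia.
Qed.

End GoodX.


Lemma wset_ext w1 w2 X : good X -> (forall v, act w1 v = act w2 v) -> wset adj w1 X = wset adj w2 X.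
Proof.
move=> gX H; rewrite !wset_good //; apply/fsetP => y.
by apply/imfsetP/imfsetP => [[x xX ->]|[x xX ->]]; exists x => //; rewrite H.
Qed.

Lemma refl_comm i j (v : vec) : C i j = 0 -> refl i (refl j v) = refl j (refl i v).
Proof.
move=> c; apply/ffunP => m; rewrite !ffunE !ip_refl !ip_alpha (cartan_sym j i) c; ring.
Qed.

Lemma refl_braid i j (v : vec) : C i j = -1 ->
  refl i (refl j (refl i v)) = refl j (refl i (refl j v)).
Proof.
move=> c; apply/ffunP => m; rewrite !ffunE !ip_refl !ip_alpha !cartan_diag (cartan_sym j i) c.
try ring.
Qed.

Variable Bs : {fset vec} -> Prop.
Hypothesis orb : is_orbit adj Bs.

Lemma B0_good B0 : orth_pos_set adj B0 -> good B0.
Proof.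
move=> [H1 H2] b bB; have [[w [k Eb]] bnn] := H1 b bB.
split; first exact: bnn.
split; first by rewrite Eb ip_act ip_alpha cartan_diag.
move=> c cB ne; by apply: H2.
Qed.

Lemma Bs_good X : Bs X -> good X.
Proof.
move: orb => [B0 gB0 H] /H [w ->]; apply: good_wset; exact: B0_good.
Qed.

Lemma Bs_R X k : Bs X -> Bs (R k X).
Proof.
move: orb => [B0 gB0 H] /H [w ->]; apply/H; exists (k :: w).
by rewrite /R wset_cat //; exact: B0_good.
Qed.

Lemma RK X k : good X -> R k (R k X) = X.
Proof.
move=> gX; rewrite /R wset_cat // -{2}(wset_nil gX); apply: wset_ext => // v /=; exact: reflK.
Qed.

Local Notation lt := (mlt adj Bs).

Lemma lt_LX X Y : lt X Y -> LX X Y.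
Proof.
elim => [x y [_ [k [_ P]]]|x y z _ IH1 _ IH2]; first exact: prec_LX.
exact: LX_trans IH1 IH2.
Qed.

Lemma lt_irr X : ~ lt X X.
Proof. by move/lt_LX/LX_irr. Qed.

Lemma up_step X k : Bs X -> Up k X -> lt X (R k X).
Proof.
move=> BX U; apply: t_step; split; first exact: BX.
exists k; split; first by [].
exact: (@Up_prec X (Bs_good BX) k U).
Qed.

Lemma dn_step X k : Bs X -> Dn k X -> lt (R k X) X.
Proof.
move=> BX D; apply: t_step; split; first exact: Bs_R.
exists k; split; first by have := RK k (Bs_good BX); rewrite /R => ->.
exact: (@Dn_prec X (Bs_good BX) k D).
Qed.

Lemma step_up X k : Bs X -> lt X (R k X) -> Up k X.
Proof.
move=> BX H; case: (trich (Bs_good BX) k) => [E|[D|//]].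
  by move: H; rewrite E => /lt_irr.
by exfalso; apply: (@lt_irr X); apply: t_trans H (dn_step BX D).
Qed.

Lemma step_dn X k : Bs X -> lt (R k X) X -> Dn k X.
Proof.
move=> BX H; case: (trich (Bs_good BX) k) => [E|[//|U]].
  by move: H; rewrite E => /lt_irr.
by exfalso; apply: (@lt_irr X); apply: t_trans (up_step BX U) H.
Qed.


Lemma memR X k y : good X -> alpha k \notin X -> y \in R k X -> exists2 x, x \in X & y = refl k x.
Proof. by move=> gX aX; rewrite /R wset_img // => /imfsetP. Qed.

Lemma memR' X k x : good X -> alpha k \notin X -> x \in X -> refl k x \in R k X.
Proof. by move=> gX aX xX; rewrite /R wset_img //; apply/imfsetP; exists x. Qed.

Lemma epsR k m (z : vec) : eps m (refl k z) = eps m z - eps k z * C k m.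
Proof. by rewrite ip_refl ip_alpha. Qed.

Lemma ht_pos X x : good X -> x \in X -> 1 <= ht x.
Proof.
move=> gX xX; exact: nonneg_ht_pos (gX_nn gX xX) (nrm2_neq0 (gX_n2 gX xX)).
Qed.

Ltac ipx := rewrite ?(ipBl, ipBr, ipDl, ipDr, ipNl, ipNr) ?opprK ?ip_alpha ?cartan_diag ?(ipC (alpha _)).

Lemma L1 X i j : good X -> C i j = 0 -> Dn i X -> Dn j (R i X) -> Dn j X.
Proof.
move=> gX c [aiX [a aX [ea Ha]]] [ajY [x' x'Y [ex' Hx']]].
have [x xX Ex] := memR gX aiX x'Y; subst x'.
have cji : C j i = 0 by rewrite cartan_sym.
have epj z : eps j (refl i z) = eps j z by rewrite epsR c mulr0 subr0.
have ajX : alpha j \notin X.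
  apply: contra ajY => ajX; have := memR' gX aiX ajX.
  by rewrite refl_fixed // ip_alpha cji.
have exj : eps j x != 0 by rewrite -epj.
have Hx z : z \in X -> eps j z != 0 -> ht x - eps i x - eps j x < ht z - eps i z.
  move=> zX ez; have := Hx' (refl i z) (memR' gX aiX zX); rewrite !epj !ht_refl'; apply => //.
case: (trich gX j) => [E|[//|[_ [y0 y0X [ey0 Hy0]]]]].
  by exfalso; have := M1 gX ajX xX exj; rewrite E xX.
exfalso.
have va := gX_eps gX aiX aX; have vx := gX_eps gX aiX xX; have vy := gX_eps gX aiX y0X.
have wa := gX_eps gX ajX aX; have wx := gX_eps gX ajX xX; have wy := gX_eps gX ajX y0X.
have sa := Ha a aX ea; have sx := Hx x xX exj; have sy := Hy0 y0 y0X ey0.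
have h1 := Hx y0 y0X ey0; have h2 := Hy0 x xX exj.
have Exj : eps j x = 1 by lia.
have Ey0j : eps j y0 = -1 by lia.
have Exi : eps i x = 1 by lia.
have Ey0i : eps i y0 = -1 by lia.
have ey0i : eps i y0 != 0 by rewrite Ey0i.
have h3 := Ha y0 y0X ey0i.
have Eai : eps i a = 1 by lia.
have nax : a != x by apply/negP => /eqP E; rewrite E in h3; lia.
have nay : a != y0 by apply/negP => /eqP E; rewrite E Ey0i in Eai.
have nxy : x != y0 by apply/negP => /eqP E; rewrite E Ey0j in Exj.
have oax := gX_orth gX aX xX nax; have oay := gX_orth gX aX y0X nay.
have oxy := gX_orth gX xX y0X nxy.
have v0 : x - y0 - alpha i - alpha j = 0.
  apply: pd0; ipx; rewrite (ipC y0 x) oxy (gX_n2 gX xX) (gX_n2 gX y0X) c cji Exj Ey0j Exi Ey0i; ring.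
have : ip a (x - y0 - alpha i - alpha j) = 0 by rewrite v0 ipC ip0l.
ipx; rewrite oax oay Eai => Eaj.
have eaj : eps j a != 0 by apply/eqP; lia.
have h4 := Hx a aX eaj; lia.
Qed.


Lemma Lup X i j : good X -> C i j = 0 -> Up i X -> Up j (R i X) -> Up j X.
Proof.
move=> gX c [aiX [z zX [ez Hz]]] [ajY [y' y'Y [ey' Hy']]].
have [y yX Ey] := memR gX aiX y'Y; subst y'.
have cji : C j i = 0 by rewrite cartan_sym.
have epj t : eps j (refl i t) = eps j t by rewrite epsR c mulr0 subr0.
have ajX : alpha j \notin X.
  apply: contra ajY => ajX; have := memR' gX aiX ajX.
  by rewrite refl_fixed // ip_alpha cji.
have eyj : eps j y != 0 by rewrite -epj.
have Hy t : t \in X -> eps j t != 0 -> ht y - eps i y < ht t - eps i t - eps j t.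
  move=> tX et; have := Hy' (refl i t) (memR' gX aiX tX); rewrite !epj !ht_refl'; apply => //.
case: (trich gX j) => [E|[[_ [x0 x0X [ex0 Hx0]]]|//]].
  by exfalso; have := M1 gX ajX yX eyj; rewrite E yX.
exfalso.
have vz := gX_eps gX aiX zX; have vx := gX_eps gX aiX x0X; have vy := gX_eps gX aiX yX.
have wz := gX_eps gX ajX zX; have wx := gX_eps gX ajX x0X; have wy := gX_eps gX ajX yX.
have sz := Hz z zX ez; have sx := Hx0 x0 x0X ex0; have sy := Hy y yX eyj.
have h1 := Hy x0 x0X ex0; have h2 := Hx0 y yX eyj.
have Eyj : eps j y = -1 by lia.
have Exj : eps j x0 = 1 by lia.
have Eyi : eps i y = 1 by lia.
have Exi : eps i x0 = -1 by lia.
have Ezi : eps i z = -1 by lia.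
have eyi : eps i y != 0 by rewrite Eyi.
have h3 := Hz y yX eyi.
have nzy : z != y by apply/negP => /eqP E; rewrite E Eyi in Ezi.
have nzx : z != x0 by apply/negP => /eqP E; rewrite E in h3; lia.
have nyx : y != x0 by apply/negP => /eqP E; rewrite E Exi in Eyi.
have ozy := gX_orth gX zX yX nzy; have ozx := gX_orth gX zX x0X nzx.
have oyx := gX_orth gX yX x0X nyx.
have v0 : y - x0 - alpha i + alpha j = 0.
  apply: pd0; ipx; rewrite (ipC x0 y) oyx (gX_n2 gX yX) (gX_n2 gX x0X) c cji Exj Eyj Exi Eyi; ring.
have : ip z (y - x0 - alpha i + alpha j) = 0 by rewrite v0 ipC ip0l.
ipx; rewrite ozy ozx Ezi => Ezj.
have ezj : eps j z != 0 by apply/eqP; lia.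
have h4 := Hx0 z zX ezj; lia.
Qed.

Lemma Kl X i j x w : good X -> C i j = -1 -> x \in X -> w \in X ->
  eps j x = 1 -> eps j w = -1 -> eps i x <= eps i w.
Proof.
move=> gX c xX wX ex ew.
have cji : C j i = -1 by rewrite cartan_sym.
have nxw : x != w by apply/negP => /eqP E; rewrite E ew in ex.
have o := gX_orth gX xX wX nxw.
rewrite leNgt; apply/negP => hlt.
have hv : ip (x - w - alpha j) (x - w - alpha j) = 2.
  ipx; rewrite (ipC w x) o (gX_n2 gX xX) (gX_n2 gX wX) ex ew; ring.
have hvi : ip (x - w - alpha j) (alpha i) = eps i x - eps i w + 1.
  by ipx; rewrite cji; ring.
have := nrm2_ip_le i hv; rewrite hvi => h.
have e2 : ip (x - w - alpha j) (alpha i) = 2 by lia.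
have Ev := nrm2_ip_eq2 hv e2.
have : ip (x - w - alpha j) (alpha j) = 0 by ipx; rewrite ex ew; ring.
by rewrite Ev ip_alpha c.
Qed.

Lemma H1l X i j x z : good X -> C i j = -1 -> x \in X -> z \in X ->
  eps i x = 1 -> eps i z = -1 -> eps j x = eps j z -> ht z = ht x - 2 -> False.
Proof.
move=> gX c xX zX ex ez exz hz.
have nxz : x != z by apply/negP => /eqP E; rewrite E ez in ex.
have o := gX_orth gX xX zX nxz.
have hv : ip (x - z - alpha i) (x - z - alpha i) = 2.
  ipx; rewrite (ipC z x) o (gX_n2 gX xX) (gX_n2 gX zX) ex ez; ring.
have h1 : ht (x - z - alpha i) = 1 by rewrite !htB ht_alpha hz; ring.
have [t Et] := ht1_alpha hv h1.
have : ip (x - z - alpha i) (alpha j) = 1 by ipx; rewrite exz c; ring.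
rewrite Et ip_alpha; by case: (cartan_vals t j) => [[->]|[[->]|[->]]].
Qed.

Lemma ajY_lem X i j : good X -> C i j = -1 -> Up i X -> alpha j \notin R i X.
Proof.
move=> gX c [aiX [z zX [ez Hz]]]; apply/negP => /(memR gX aiX) [x xX Ex].
have cji : C j i = -1 by rewrite cartan_sym.
have e1 : eps i (alpha j) = -1 by rewrite ip_alpha cji.
rewrite Ex eps_refl in e1.
have h1 : ht (alpha j) = 1 := ht_alpha j.
rewrite Ex ht_refl' in h1.
have exi : eps i x != 0 by apply/eqP; lia.
have := Hz x xX exi; have := ht_pos gX zX; lia.
Qed.

Lemma L3 X i j : good X -> C i j = -1 -> Up i X -> Up j X -> Up j (R i X).
Proof.
move=> gX c UiX UjX; have ajY := ajY_lem gX c UiX.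
move: (UiX) (UjX) => [aiX [z zX [ez Hz]]] [ajX [w wX [ew Hw]]].
have cji : C j i = -1 by rewrite cartan_sym.
have gY : good (R i X) by apply: good_wset.
have epj t : eps j (refl i t) = eps j t + eps i t by rewrite epsR c; ring.
have vE t : t \in X -> eps j t + eps i t = -1 \/ eps j t + eps i t = 0 \/ eps j t + eps i t = 1.
  by move=> tX; rewrite -epj; apply: (gX_eps gY ajY); apply: memR'.
have vz := gX_eps gX aiX zX; have vw := gX_eps gX aiX wX.
have uz := gX_eps gX ajX zX; have uw := gX_eps gX ajX wX.
have sz := Hz z zX ez; have sw := Hw w wX ew.
case: (trich gY j) => [E|[[_ [x' x'Y [ex' Hx']]]|//]]; exfalso.
  have Ew : eps j w + eps i w != 0.
    apply/negP => /eqP Ew.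
    have Ez : eps j z + eps i z = 0.
      case: (eqVneq (eps j z + eps i z) 0) => // Ez; exfalso.
      have := M1 gY ajY (memR' gX aiX zX); rewrite epj => /(_ Ez).
      by rewrite E (memR' gX aiX zX).
    have ewi : eps i w != 0 by apply/eqP; lia.
    have ezj : eps j z != 0 by apply/eqP; lia.
    have := Hz w wX ewi; have := Hw z zX ezj; lia.
  have := M1 gY ajY (memR' gX aiX wX); rewrite epj => /(_ Ew).
  by rewrite E (memR' gX aiX wX).
have [x xX Ex] := memR gX aiX x'Y; subst x'.
have Hx t : t \in X -> eps j t + eps i t != 0 ->
    ht x - eps i x - (eps j x + eps i x) < ht t - eps i t.
  move=> tX et; have := Hx' (refl i t) (memR' gX aiX tX); rewrite !epj !ht_refl'; apply => //.
have ex : eps j x + eps i x != 0 by rewrite -epj.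
have vx := gX_eps gX aiX xX; have ux := gX_eps gX ajX xX.
have sx := Hx x xX ex.
have Ezi : eps i z = -1 by lia.
have Ewj : eps j w = -1 by lia.
have E1 : eps j x + eps i x = 1 by have := vE x xX; lia.
clear sx sz sw.
case: vx => [exi|[exi|exi]].
- lia.
- have Exj : eps j x = 1 by lia.
  have exj : eps j x != 0 by rewrite Exj.
  have hw1 := Hw x xX exj.
  have k1 := @Kl X i j x w gX c xX wX Exj Ewj.
  case: vw => [ewi|[ewi|ewi]]; first by lia.
    have ew' : eps j w + eps i w != 0 by rewrite Ewj ewi.
    have := Hx w wX ew'; lia.
  have ewi' : eps i w != 0 by rewrite ewi.
  have hz1 := Hz w wX ewi'.
  case: (eqVneq (eps j z) 1) => [ezj|ezj].
    have ezj' : eps j z != 0 by rewrite ezj.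
    have := Hw z zX ezj'; lia.
  have ez' : eps j z + eps i z != 0 by rewrite Ezi; apply/eqP; move: ezj => /eqP; lia.
  have := Hx z zX ez'; lia.
- have Exj : eps j x = 0 by lia.
  have exi' : eps i x != 0 by rewrite exi.
  have hz1 := Hz x xX exi'.
  have k2 := @Kl X j i x z gX cji xX zX exi Ezi.
  case: uz => [ezj|[ezj|ezj]]; first by lia.
    have ez' : eps j z + eps i z != 0 by rewrite Ezi ezj.
    have := Hx z zX ez' => h.
    apply: (@H1l X i j x z gX c xX zX exi Ezi); [by rewrite Exj ezj | lia].
  have ezj' : eps j z != 0 by rewrite ezj.
  have hw1 := Hw z zX ezj'.
  case: (eqVneq (eps i w) 1) => [ewi|ewi].
    have ewi' : eps i w != 0 by rewrite ewi.
    have := Hz w wX ewi'; lia.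
  have ew' : eps j w + eps i w != 0 by rewrite Ewj; apply/eqP; move: ewi => /eqP; lia.
  have := Hx w wX ew'; lia.
Qed.

Lemma L4 X i j : good X -> C i j = -1 -> Up i X -> Up j X -> Up i (R j (R i X)).
Proof.
move=> gX c UiX UjX; have ajY := ajY_lem gX c UiX.
move: (UiX) (UjX) => [aiX _] [ajX [w wX [ew Hw]]].
have cji : C j i = -1 by rewrite cartan_sym.
have gY : good (R i X) by apply: good_wset.
have gV : good (R j (R i X)) by apply: good_wset.
have ep t : eps i (refl j (refl i t)) = eps j t by rewrite !epsR cji cartan_diag c; ring.
have hp t : ht (refl j (refl i t)) = ht t - 2 * eps i t - eps j t.
  by rewrite !ht_refl' epsR c; ring.
have mV t : t \in X -> refl j (refl i t) \in R j (R i X) by move=> tX; apply: memR' => //; apply: memR'.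
have aiV : alpha i \notin R j (R i X).
  apply/negP => /(memR gY ajY) [y' /(memR gX aiX) [t tX ->] E].
  have := gX_eps gX ajX tX; rewrite -ep -E ip_alpha cartan_diag; lia.
case: (trich gV i) => [E|[[_ [x'' x''V [ex'' Hx'']]]|//]]; exfalso.
  have := M1 gV aiV (mV w wX); rewrite ep => /(_ ew); by rewrite E mV.
have [x' x'Y Ex'] := memR gY ajY x''V; have [x xX Ex] := memR gX aiX x'Y; subst x'' x'.
have Hx t : t \in X -> eps j t != 0 ->
    ht x - 2 * eps i x - eps j x - eps j x < ht t - 2 * eps i t - eps j t.
  move=> tX et; have := Hx'' _ (mV t tX); rewrite !ep !hp; apply => //.
have ex : eps j x != 0 by rewrite -ep.
have vx := gX_eps gX aiX xX; have ux := gX_eps gX ajX xX.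
have vw := gX_eps gX aiX wX; have uw := gX_eps gX ajX wX.
have sx := Hx x xX ex; have sw := Hw w wX ew.
have h1 := Hw x xX ex; have h2 := Hx w wX ew.
have Exj : eps j x = 1 by lia.
have Ewj : eps j w = -1 by lia.
have k1 := @Kl X i j x w gX c xX wX Exj Ewj.
clear sx sw.
have Eq : eps i x = eps i w by lia.
have Eh : ht w = ht x - 2 by lia.
exact: (@H1l X j i x w gX cji xX wX Exj Ewj Eq Eh).
Qed.

Lemma C2 X i j : good X -> C i j = -1 -> alpha i \notin X -> alpha j \notin R i X ->
  Up i (R j (R i X)) -> Up j X.
Proof.
move=> gX c aiX ajY [aiV [u'' u''V [eu'' Hu'']]].
have cji : C j i = -1 by rewrite cartan_sym.
have gY : good (R i X) by apply: good_wset.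
have gV : good (R j (R i X)) by apply: good_wset.
have ep t : eps i (refl j (refl i t)) = eps j t by rewrite !epsR cji cartan_diag c; ring.
have hp t : ht (refl j (refl i t)) = ht t - 2 * eps i t - eps j t.
  by rewrite !ht_refl' epsR c; ring.
have mV t : t \in X -> refl j (refl i t) \in R j (R i X) by move=> tX; apply: memR' => //; apply: memR'.
have [u' u'Y Eu'] := memR gY ajY u''V; have [u uX Eu] := memR gX aiX u'Y; subst u'' u'.
have Hu t : t \in X -> eps j t != 0 ->
    ht u - 2 * eps i u - eps j u < ht t - 2 * eps i t - eps j t - eps j t.
  move=> tX et; have := Hu'' _ (mV t tX); rewrite !ep !hp; apply => //.
have eu : eps j u != 0 by rewrite -ep.
have ajX : alpha j \notin X.
  apply/negP => ajX; have := mV _ ajX => aV.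
  have h2 : ip (refl j (refl i (alpha j))) (refl j (refl i (alpha j))) = 2.
    by rewrite !ip_refl2 ip_alpha cartan_diag.
  have e2 : eps i (refl j (refl i (alpha j))) = 2 by rewrite ep ip_alpha cartan_diag.
  by move: aV; rewrite (nrm2_ip_eq2 h2 e2) (negbTE aiV).
case: (trich gX j) => [E|[[_ [x0 x0X [ex0 Hx0]]]|//]]; exfalso.
  by have := M1 gX ajX uX eu; rewrite E uX.
have vx := gX_eps gX aiX x0X; have ux := gX_eps gX ajX x0X.
have vu := gX_eps gX aiX uX; have uu := gX_eps gX ajX uX.
have sx := Hx0 x0 x0X ex0; have su := Hu u uX eu.
have h1 := Hx0 u uX eu; have h2 := Hu x0 x0X ex0.
have Euj : eps j u = -1 by lia.
have Exj : eps j x0 = 1 by lia.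
have Eui : eps i u = 1 by lia.
have Exi : eps i x0 = -1 by lia.
have nux : u != x0 by apply/negP => /eqP E; rewrite E Exj in Euj.
have o := gX_orth gX uX x0X nux.
have hv : ip (u - x0 - alpha i + alpha j) (u - x0 - alpha i + alpha j) = 2.
  ipx; rewrite (ipC x0 u) o (gX_n2 gX uX) (gX_n2 gX x0X) c cji Exj Euj Exi Eui; ring.
have := nrm2_ht hv; rewrite htD !htB !ht_alpha; lia.
Qed.


Lemma Rcomm X i j : good X -> C i j = 0 -> R i (R j X) = R j (R i X).
Proof. move=> gX c; rewrite /R !wset_cat //; apply: wset_ext => // v /=; exact: refl_comm. Qed.

Lemma Rbraid X i j : good X -> C i j = -1 -> R i (R j (R i X)) = R j (R i (R j X)).
Proof.
move=> gX c; have g1 : good (wset adj [:: i] X) by apply: good_wset.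
have g2 : good (wset adj [:: j] X) by apply: good_wset.
rewrite /R !wset_cat //; apply: wset_ext => // v /=; exact: refl_braid.
Qed.

Hypothesis admc : forall B, Bs B -> forall i j : 'I_n, ~~ adj i j -> forall g, g \in B ->
  [ffun k => g k - alpha i k + alpha j k] \in B -> wset adj [:: i] B = wset adj [:: j] B.

Lemma L2 X i j : Bs X -> ~~ adj i j -> i != j -> Up i X -> Up j X -> R i X != R j X ->
  Up j (R i X).
Proof.
move=> BX nadj ij [aiX _] [ajX [w wX [ew Hw]]] neq.
have gX := Bs_good BX.
have c : C i j = 0 by rewrite cartan_off // (negbTE nadj).
have cji : C j i = 0 by rewrite cartan_sym.
have gY : good (R i X) by apply: good_wset.
have BY := Bs_R i BX.
have epj t : eps j (refl i t) = eps j t by rewrite epsR c mulr0 subr0.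
have ajY : alpha j \notin R i X.
  apply/negP => /(memR gX aiX) [t tX Et].
  have : refl i (alpha j) = t by rewrite Et reflK.
  rewrite refl_fixed ?ip_alpha ?cji // => Et'.
  by move: tX; rewrite -Et' (negbTE ajX).
case: (trich gY j) => [E|[[_ [x' x'Y [ex' Hx']]]|//]]; exfalso.
  have := M1 gY ajY (memR' gX aiX wX); rewrite epj => /(_ ew).
  by rewrite E (memR' gX aiX wX).
have [x xX Ex] := memR gX aiX x'Y; subst x'.
have Hx t : t \in X -> eps j t != 0 -> ht x - eps i x - eps j x < ht t - eps i t.
  move=> tX et; have := Hx' (refl i t) (memR' gX aiX tX); rewrite !epj !ht_refl'; apply => //.
have ex : eps j x != 0 by rewrite -epj.
have vx := gX_eps gX aiX xX; have ux := gX_eps gX ajX xX.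
have vw := gX_eps gX aiX wX; have uw := gX_eps gX ajX wX.
have sx := Hx x xX ex; have sw := Hw w wX ew.
have h1 := Hw x xX ex; have h2 := Hx w wX ew.
have Exj : eps j x = 1 by lia.
have Ewj : eps j w = -1 by lia.
have Exi : eps i x = 1 by lia.
have Ewi : eps i w = -1 by lia.
have nxw : x != w by apply/negP => /eqP E; rewrite E Ewj in Exj.
have oxw := gX_orth gX xX wX nxw.
have v0 : x - w - alpha i - alpha j = 0.
  apply: pd0; ipx; rewrite (ipC w x) oxw (gX_n2 gX xX) (gX_n2 gX wX) c cji Exj Ewj Exi Ewi; ring.
have Eg : [ffun k => refl i w k - alpha i k + alpha j k] = refl i x.
  apply/ffunP => m; have := congr1 (fun f : vec => f m) v0; rewrite !ffunE Ewi Exi => h.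
  have hx : x m = w m + (m == i)%:R + (m == j)%:R by rewrite -[x m]subr0 -h; ring.
  rewrite hx; ring.
have := admc BY nadj (memR' gX aiX wX); rewrite Eg => /(_ (memR' gX aiX xX)).
rewrite -/(R i (R i X)) -/(R j (R i X)) RK // => EX.
move/eqP: neq; apply; by rewrite {2}EX RK.
Qed.


Lemma main_sec B i j : Bs B ->
  let r w := wset adj w B in
  let lt := mlt adj Bs in
  (~~ adj i j -> lt (r [:: i; j]) (r [:: i]) -> lt (r [:: i]) B ->
     lt (r [:: i; j]) (r [:: j]) /\ lt (r [:: j]) B) /\
  (~~ adj i j -> lt B (r [:: i]) -> lt B (r [:: j]) -> r [:: i] <> r [:: j] ->
     lt (r [:: i]) (r [:: i; j]) /\ lt (r [:: j]) (r [:: i; j])) /\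
  (adj i j -> lt B (r [:: i]) -> lt B (r [:: j]) ->
     (lt (r [:: i]) (r [:: j; i]) /\ lt (r [:: j; i]) (r [:: i; j; i])) /\
     (lt (r [:: j]) (r [:: i; j]) /\ lt (r [:: i; j]) (r [:: j; i; j]))) /\
  (adj i j -> lt (r [:: j; i; j]) (r [:: j; i]) -> lt (r [:: j; i]) (r [:: i]) ->
     lt (r [:: i]) B ->
     lt (r [:: j; i; j]) (r [:: i; j]) /\ lt (r [:: i; j]) (r [:: j]) /\ lt (r [:: j]) B) /\
  (~ in_perp adj B (alpha i) -> alpha i \notin B -> lt (r [:: i]) B \/ lt B (r [:: i])).
Proof.
move=> BB r lt0; rewrite /r /lt0 {r lt0}.
have gB := Bs_good BB.
have w2 k l : wset adj [:: k; l] B = R k (R l B) by rewrite /R wset_cat.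
have w3 k l m : wset adj [:: k; l; m] B = R k (R l (R m B)).
  have g1 : good (wset adj [:: m] B) by apply: good_wset.
  by rewrite /R !wset_cat.
have w1 k : wset adj [:: k] B = R k B by [].
rewrite !w3 (w2 i j) (w2 j i).
have BR k X : Bs X -> Bs (R k X) := fun H => Bs_R k H.
have GR k X : Bs X -> good (R k X) := fun H => Bs_good (Bs_R k H).
split.
  move=> nadj h1 h2.
  case: (eqVneq i j) => [E|ij].
    subst j; exfalso; rewrite (RK i gB) in h1; apply: (@lt_irr B); exact: t_trans h1 h2.
  have c : C i j = 0 by rewrite cartan_off // (negbTE nadj).
  have cji : C j i = 0 by rewrite cartan_sym.
  have Dib := step_dn BB h2.
  rewrite (Rcomm gB c) in h1.
  have Djb : Dn j (R i B) := step_dn (BR i B BB) h1.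
  have Dj := L1 gB c Dib Djb.
  split; last exact: dn_step BB Dj.
  have BW : Bs (R j (R i B)) := BR j _ (BR i B BB).
  have E1 : R j (R j (R i B)) = R i B := RK j (GR i B BB).
  have Ujw : Up j (R j (R i B)).
    apply: (step_up BW); rewrite E1; exact: h1.
  have E2 : R i (R i B) = B := RK i gB.
  have Uiw : Up i (R j (R j (R i B))).
    rewrite E1; apply: (step_up (BR i B BB)); rewrite E2; exact: h2.
  have Ui := Lup (Bs_good BW) cji Ujw Uiw.
  have := up_step BW Ui.
  have E3 : R i (R j (R i B)) = R j B by rewrite -(Rcomm gB c) (RK i (GR j B BB)).
  by rewrite E3 -(Rcomm gB c).
split.
  move=> nadj h1 h2 ne.
  case: (eqVneq i j) => [E|ij]; first by subst j; exfalso; exact: ne.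
  have c : C i j = 0 by rewrite cartan_off // (negbTE nadj).
  have Ui := step_up BB h1; have Uj := step_up BB h2.
  have nadj' : ~~ adj j i by rewrite adj_sym.
  have ji : j != i by rewrite eq_sym.
  have ne1 : R i B != R j B by apply/eqP.
  have ne2 : R j B != R i B by rewrite eq_sym.
  split.
    have := up_step (BR i B BB) (L2 BB nadj ij Ui Uj ne1); by rewrite (Rcomm gB c).
  exact: up_step (BR j B BB) (L2 BB nadj' ji Uj Ui ne2).
split.
  move=> aij h1 h2.
  have ij : i != j by apply/eqP => E; move: aij; rewrite E adj_irr.
  have c : C i j = -1 by rewrite cartan_off // aij.
  have cji : C j i = -1 by rewrite cartan_sym.
  have Ui := step_up BB h1; have Uj := step_up BB h2.
  split; split.
  - exact: up_step (BR i B BB) (L3 gB c Ui Uj).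
  - exact: up_step (BR j _ (BR i B BB)) (L4 gB c Ui Uj).
  - exact: up_step (BR j B BB) (L3 gB cji Uj Ui).
  - exact: up_step (BR i _ (BR j B BB)) (L4 gB cji Uj Ui).
split.
  move=> aij h1 h2 h3.
  have ij : i != j by apply/eqP => E; move: aij; rewrite E adj_irr.
  have c : C i j = -1 by rewrite cartan_off // aij.
  have cji : C j i = -1 by rewrite cartan_sym.
  have BBot : Bs (R j (R i (R j B))) := BR j _ (BR i _ (BR j B BB)).
  have gBot := Bs_good BBot.
  have EB : R j (R i (R j B)) = R i (R j (R i B)) by rewrite (Rbraid gB c).
  have E1 : R i (R j (R i (R j B))) = R j (R i B) by rewrite EB (RK i (GR j _ (BR i B BB))).
  have E2 : R j (R j (R i B)) = R i B := RK j (GR i B BB).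
  have E3 : R i (R i B) = B := RK i gB.
  have Ui : Up i (R j (R i (R j B))).
    apply: (step_up BBot); rewrite E1; exact: h1.
  have BiBot : Bs (R i (R j (R i (R j B)))) := BR i _ BBot.
  have Uj1 : Up j (R i (R j (R i (R j B)))).
    apply: (step_up BiBot); rewrite E1 E2; exact: h2.
  have Ui2 : Up i (R j (R i (R j (R i (R j B))))).
    apply: (step_up (BR j _ BiBot)); rewrite E1 E2 E3; exact: h3.
  have Uj : Up j (R j (R i (R j B))).
    apply: (C2 gBot c); [by case: Ui | by case: Uj1 | exact: Ui2].
  have F1 : R j (R j (R i (R j B))) = R i (R j B) := RK j (GR i _ (BR j B BB)).
  have F2 : R i (R i (R j B)) = R j B := RK i (GR j B BB).
  have F3 : R j (R j B) = B := RK j gB.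
  split; first by have := up_step BBot Uj; rewrite F1.
  split; first by have := up_step (BR j _ BBot) (L3 gBot cji Uj Ui); rewrite F1 F2.
  by have := up_step (BR i _ (BR j _ BBot)) (L4 gBot cji Uj Ui); rewrite F1 F2 F3.
move=> nperp aiB.
have [b bB eb] : exists2 b, b \in B & eps i b != 0.
  case: (boolP [exists b : B, eps i (val b) != 0]) => [/existsP [[b bB] /= e]|/existsPn H].
    by exists b.
  exfalso; apply: nperp; split; first by exists [::], i.
  move=> b bB; have := H [` bB]; rewrite negbK /= => /eqP e; by rewrite ipC.
case: (trich gB i) => [E|[D|U]].
- by exfalso; have := M1 gB aiB bB eb; rewrite E bB.
- by left; exact: dn_step BB D.
- by right; exact: up_step BB U.
Qed.

End Basic.

Theorem lemma3p4 (n : nat) (adj : rel 'I_n) (Bs : {fset {ffun 'I_n -> int}} -> Prop)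
  (B : {fset {ffun 'I_n -> int}}) (i j : 'I_n) :
  coxeter_diagram adj -> spherical adj -> admissible adj Bs -> Bs B ->
  let r w := wset adj w B in
  let lt := mlt adj Bs in
  (~~ adj i j -> lt (r [:: i; j]) (r [:: i]) -> lt (r [:: i]) B ->
     lt (r [:: i; j]) (r [:: j]) /\ lt (r [:: j]) B) /\
  (~~ adj i j -> lt B (r [:: i]) -> lt B (r [:: j]) -> r [:: i] <> r [:: j] ->
     lt (r [:: i]) (r [:: i; j]) /\ lt (r [:: j]) (r [:: i; j])) /\
  (adj i j -> lt B (r [:: i]) -> lt B (r [:: j]) ->
     (lt (r [:: i]) (r [:: j; i]) /\ lt (r [:: j; i]) (r [:: i; j; i])) /\
     (lt (r [:: j]) (r [:: i; j]) /\ lt (r [:: i; j]) (r [:: j; i; j]))) /\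
  (adj i j -> lt (r [:: j; i; j]) (r [:: j; i]) -> lt (r [:: j; i]) (r [:: i]) ->
     lt (r [:: i]) B ->
     lt (r [:: j; i; j]) (r [:: i; j]) /\ lt (r [:: i; j]) (r [:: j]) /\ lt (r [:: j]) B) /\
  (~ in_perp adj B (alpha i) -> alpha i \notin B -> lt (r [:: i]) B \/ lt B (r [:: i])).
Proof.
move=> [asym airr] [s sph] [orb admc] BB.
exact: (main_sec asym airr sph orb admc i j BB).
Qed.
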